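(* Let $P$ be a finite $p$-group containing a non-trivial proper subgroup $H$ with the following property: for every subgroup $H'\le P$ containing $H$ with $[H':H]=p$, the group $H'$ is cyclic. Then $P$ is cyclic or generalized quaternion.
   Context: The generalized quaternion group of order $2^n$, $n\ge3$, is $Q_{2^n}=\langle x,y\mid x^{2^{n-1}}=1,\ y^2=x^{2^{n-2}},\ yxy^{-1}=x^{-1}\rangle$. *)

(* Defs.v *)
From mathcomp Require Import all_boot all_fingroup all_solvable.
Set Implicit Arguments.
Unset Strict Implicit.
Unset Printing Implicit Defensive.

(* Main.v *)
Require Import Defs.
From mathcomp Require Import all_boot all_fingroup all_solvable.
Local Open Scope group_scope.
Set Implicit Arguments.
Unset Strict Implicit.
Unset Printing Implicit Defensive.
Lemma overgroup (gT : finGroupType) p (P H : {group gT}) :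
  prime p -> p.-group P -> H \proper P ->
  exists2 K : {group gT}, H \subset K & K \subset P /\ #|K : H| = p.
Proof.
move=> pr_p pP prHP.
have prN := nilpotent_proper_norm (pgroup_nil pP) prHP.
have sHP := proper_sub prHP.
have nsHN : H <| 'N_P(H) by rewrite normal_subnorm.
have sNP : 'N_P(H) \subset P := subsetIl _ _.
have nHN : 'N_P(H) \subset 'N(H) := subsetIr _ _.
have pNq : p.-group ('N_P(H) / H) := quotient_pgroup _ (pgroupS sNP pP).
have ntNq : 'N_P(H) / H != 1.
  rewrite -cardG_gt1 card_quotient // indexg_gt1.
  by case/properP: prN => _ [x Nx nHx]; apply/subsetPn; exists x.
have [_ pdiv _] := pgroup_pdiv pNq ntNq.
have [xb Nxb oxb] := Cauchy pr_p pdiv.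
have sXN : <[xb]> \subset 'N_P(H) / H by rewrite cycle_subG.
have [K defK sHK sKN] := inv_quotientS nsHN sXN.
exists K => //; split; first exact: subset_trans sKN sNP.
by rewrite -card_quotient ?(subset_trans sKN nHN) // -defK -orderE oxb.
Qed.
Definition hypH {gT : finGroupType} p (P H : {group gT}) :=
  forall H' : {group gT}, H \subset H' -> H' \subset P -> #|H' : H| = p -> cyclic H'.

Lemma lemA (gT : finGroupType) p (P H : {group gT}) (y : gT) :
  prime p -> H :!=: 1 -> p.-group H -> H \subset P -> hypH p P H ->
  y \in P -> y \in 'N(H) -> y \notin H -> #[y] = p -> False.
Proof.
move=> pr_p ntH pH sHP hyp Py nHy notHy oy.
have nHY : <[y]> \subset 'N(H) by rewrite cycle_subG.
have TI : H :&: <[y]> = 1.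
  by rewrite setIC prime_TIg ?cycle_subG // -orderE oy.
have cK : cyclic (H <*> <[y]>).
  apply: (hyp (H <*> <[y]>)%G); first exact: joing_subl.
    by rewrite join_subG sHP cycle_subG.
  rewrite -divgS ?joing_subl //= norm_joinEr // TI_cardMg // -orderE oy.
  by rewrite mulKn // cardG_gt0.
have [_ pdiv _] := pgroup_pdiv pH ntH.
have [z Hz oz] := Cauchy pr_p pdiv.
have sZK : <[z]> \subset H <*> <[y]>.
  by rewrite (subset_trans _ (joing_subl _ _)) // cycle_subG.
have sYK : <[y]> \subset H <*> <[y]> := joing_subr _ _.
have /eqP eqYZ : <[y]> == <[z]> :> {set gT}.
  by rewrite (eq_subG_cyclic cK sYK sZK) -!orderE oy oz.
by case/negP: notHy; rewrite -cycle_subG eqYZ cycle_subG.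
Qed.

Lemma cycH (gT : finGroupType) p (P H : {group gT}) :
  prime p -> p.-group P -> H \proper P -> hypH p P H -> cyclic H.
Proof.
move=> pr_p pP prHP hyp; have [K sHK [sKP iKH]] := overgroup pr_p pP prHP.
exact: cyclicS sHK (hyp K sHK sKP iKH).
Qed.

Lemma lemB (gT : finGroupType) p (P H E : {group gT}) :
  prime p -> H :!=: 1 -> p.-group P -> H \proper P -> hypH p P H ->
  E \subset P -> H \subset 'N(E) -> p.-abelem E -> #|E| = (p ^ 2)%N -> False.
Proof.
move=> pr_p ntH pP prHP hyp sEP nEH abE oE.
have sHP := proper_sub prHP; have pH := pgroupS sHP pP.
have cyH := cycH pr_p pP prHP hyp.
have defG0 : H <*> E = H * E := norm_joinEl nEH.
have nsEG0 : E <| H <*> E.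
  by rewrite /normal joing_subr join_subG nEH normG.
have pG0 : p.-group (H <*> E) by rewrite (pgroupS _ pP) // join_subG sHP sEP.
have ntE : E :!=: 1.
  by rewrite -cardG_gt1 oE (ltn_exp2l 0) // prime_gt1.
have := meet_center_nil (pgroup_nil pG0) nsEG0 ntE.
case/trivgPn => y /setIP [Ey Zy] nty.
have oy := abelem_order_p abE Ey nty.
have cHy : y \in 'C(H).
  exact: (subsetP (centS (joing_subl H E)) y (subsetP (subsetIr _ _) y Zy)).
case Hy: (y \in H); last first.
  apply: (lemA pr_p ntH pH sHP hyp (subsetP sEP y Ey)) => //.
    exact: (subsetP (cent_sub H) y cHy).
  by rewrite Hy.
have oHE : #|H :&: E| = p.
  have : #|H :&: E| %| p ^ 2 by rewrite -oE cardSg ?subsetIr.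
  case/(dvdn_pfactor _ _ pr_p) => m le_m2 oHEm.
  have abHE : p.-abelem (H :&: E) := abelemS (subsetIr _ _) abE.
  have := cyclicS (subsetIl H E) cyH; rewrite (abelem_cyclic abHE) oHEm pfactorK //.
  have : p %| #|H :&: E| by rewrite -oy order_dvdG // inE Hy Ey.
  rewrite oHEm; case: m {le_m2 oHEm} => [|[|m]] //=.
    by rewrite expn0 dvdn1 => /eqP p1; rewrite p1 in pr_p.
have iG0 : #|H <*> E : H| = p.
  rewrite -divgS ?joing_subl //= defG0.
  have := mul_cardG H E; rewrite oHE oE expnS mulnA => /eqP.
  rewrite mulnC [X in _ == X]mulnC eqn_pmul2l ?prime_gt0 // => /eqP <-.
  by rewrite mulKn ?cardG_gt0.
have sG0P : H <*> E \subset P by rewrite join_subG sHP sEP.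
have cG0 := hyp (H <*> E)%G (joing_subl _ _) sG0P iG0.
by have := cyclicS (joing_subr H E) cG0; rewrite (abelem_cyclic abE) oE pfactorK.
Qed.

Lemma lemC (gT : finGroupType) p (P H : {group gT}) (x y : gT) :
  prime p -> H :!=: 1 -> p.-group P -> H \proper P -> hypH p P H ->
  <[x]> <| P -> maximal <[x]> P -> y \in P -> y \notin <[x]> -> #[y] = p -> False.
Proof.
move=> pr_p ntH pP prHP hyp nsXP maxX Py notXy oy.
have sHP := proper_sub prHP; have pH := pgroupS sHP pP.
have [sHX | nsHX] := boolP (H \subset <[x]>).
  have nsHP : H <| P := char_normal_trans (cycle_subgroup_char sHX) nsXP.
  apply: (lemA pr_p ntH pH sHP hyp Py _ _ oy).
    exact: subsetP (normal_norm nsHP) y Py.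
  by apply: contra notXy; apply: subsetP.
have [K sHK [sKP iKH]] := overgroup pr_p pP prHP.
have cK := hyp K sHK sKP iKH.
have nsKX : ~~ (K \subset <[x]>).
  by apply: contra nsHX; apply: subset_trans.
have iKX : #|K : K :&: <[x]>| = p.
  rewrite indexgI -indexMg (mulg_normal_maximal nsXP maxX sKP nsKX).
  exact: p_maximal_index pP maxX.
have oKX : #|K :&: <[x]>| = #|H|.
  apply/eqP; rewrite -(eqn_pmul2r (prime_gt0 pr_p)).
  by rewrite -{1}iKX -iKH !Lagrange ?subsetIl.
have /eqP eqH : (H :==: K :&: <[x]>).
  by rewrite (eq_subG_cyclic cK sHK (subsetIl K <[x]>)) oKX.
by case/negP: nsHX; rewrite eqH subsetIr.
Qed.

Theorem lemma5p3 (gT : finGroupType) (p : nat) (P H : {group gT}) :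
  prime p -> p.-group P ->
  H :!=: 1 -> H \proper P ->
  (forall H' : {group gT}, H \subset H' -> H' \subset P ->
     #|H' : H| = p -> cyclic H') ->
  cyclic P \/ exists2 n : nat, 2 < n & P \isog 'Q_(2 ^ n).
Proof.
move=> pr_p pP ntH prHP hyp.
have nab : forall X : {group gT}, X <| P -> abelian X -> cyclic X.
  move=> A nsAP cAA; case: (boolP (cyclic A)) => // ncA; exfalso.
  have pA := pgroupS (normal_sub nsAP) pP.
  have ns1 : 'Ohm_1(A) <| P := char_normal_trans (Ohm_char 1 A) nsAP.
  have ab1 := Ohm1_abelem pA cAA.
  have lg : 2 <= logn p #|'Ohm_1(A)|.
    by rewrite -p_rank_abelian // -rank_pgroup // ltnNge -abelian_rank1_cyclic.
  have [E [sE nsEP oE]] := normal_pgroup pP ns1 lg.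
  exact: (lemB pr_p ntH pP prHP hyp (normal_sub nsEP)
     (subset_trans (proper_sub prHP) (normal_norm nsEP)) (abelemS sE ab1) oE).
case: (normal_rank1_structure pP nab) => [cP|]; first by left.
case/and3P => /eqP p2 ext _; subst p.
move: ext; rewrite /extremal2 !inE; case/or3P => /eqP cls.
- case/dihedral_classP: cls => n n1 iso.
  have [[x y] genP [oy _]] := generators_2dihedral n1 iso.
  have [_ maxX nsXP _ _] := extremal_generators_facts pr_p genP.
  have [_ _ _ /setDP [Py notXy]] := genP.
  by case: (lemC pr_p ntH pP prHP hyp nsXP maxX Py notXy oy).
- case/semidihedral_classP: cls => n n3 iso.
  have [[x y] genP [oy _]] := generators_semidihedral n3 iso.
  have [_ maxX nsXP _ _] := extremal_generators_facts pr_p genP.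
  have [_ _ _ /setDP [Py notXy]] := genP.
  by case: (lemC pr_p ntH pP prHP hyp nsXP maxX Py notXy oy).
by right; apply/quaternion_classP.
Qed.
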